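(* Let $n\ge 3$ be an odd integer and $k$ a positive integer with $2k\mid n+1$, and put $t=\frac{n(n+1)}{2k}$. For $1\le i\le \frac{n+1}{2k}$ and $1\le j\le k$ define $$t_{2i-1,j}=n-\bigl(2k(i-1)+(j-1)\bigr),\qquad t_{2i,j}=n-2ki+j,$$ and for $1\le j\le k$ let $T_j=\{t_{i,j}: 1\le i\le \tfrac{n+1}{k}\}$ (the $j$-th column of the $\frac{n+1}{k}\times k$ matrix $(t_{ij})$). Then $T_1,\ldots,T_k$ are pairwise disjoint, $\bigcup_{j=1}^k T_j=\{0,1,\ldots,n\}$, and $\sum_{x\in T_j}x=t$ for every $1\le j\le k$. In particular the sets $T_j\setminus\{0\}$ form a partition of $\{1,\ldots,n\}$ into $k$ sets each with sum $t$. *)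

(* Defs.v *)
From HB Require Import structures.
From mathcomp Require Import all_boot all_order all_algebra.
From mathcomp Require Import finmap.
Set Implicit Arguments. Unset Strict Implicit. Unset Printing Implicit Defensive.
Import Order.TTheory GRing.Theory Num.Theory.

Local Open Scope ring_scope.

Definition t_odd (n k i j : nat) : int :=
  n%:Z - ((2 * k * (i - 1))%:Z + (j%:Z - 1)).

Definition t_even (n k i j : nat) : int :=
  n%:Z - (2 * k * i)%:Z + j%:Z.

(* Entry t_{r,j} of the ((n+1)/k) x k matrix, for row index r >= 1:
   odd rows r = 2i-1 and even rows r = 2i. *)
Definition tmat (n k r j : nat) : int :=
  if odd r then t_odd n k (r.+1 %/ 2)%N j else t_even n k (r %/ 2)%N j.

Definition Tcol (n k j : nat) : {fset int} :=
  [fset tmat n k r j | r in iota 1 ((n.+1) %/ k)%N]%fset.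

(* Main.v *)
Require Import Defs.
From HB Require Import structures.
From mathcomp Require Import all_boot all_order all_algebra.
From mathcomp Require Import finmap zify.
Import Order.TTheory GRing.Theory Num.Theory.
Local Open Scope ring_scope.

Definition yv (k r j : nat) : nat :=
  if odd r then (2*k*((r.+1)%/2 - 1) + (j-1))%N else (2*k*(r%/2 - 1) + (2*k - j))%N.
Definition dec (k y : nat) : nat :=
  if (y %% (2*k) < k)%N then (y %% (2*k)).+1 else (2*k - y %% (2*k))%N.
Definition rdec (k y : nat) : nat :=
  if (y %% (2*k) < k)%N then (2*(y %/ (2*k))).+1 else (2*(y %/ (2*k))).+2.

Lemma rcase r : (0 < r)%N -> exists i, r = (2*i).+1 \/ r = (2*i).+2.
Proof. move=> hr; exists ((r-1)%/2)%N; lia. Qed.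

Lemma oddA i : odd (2*i).+1. Proof. by rewrite /= oddM. Qed.
Lemma oddB i : odd (2*i).+2 = false. Proof. by rewrite /= oddM. Qed.

Lemma yv_odd k i j : yv k (2*i).+1 j = (2*k*i + (j-1))%N.
Proof. rewrite /yv oddA; have -> : ((2*i).+2 %/ 2 - 1 = i)%N by lia. by []. Qed.
Lemma yv_even k i j : yv k (2*i).+2 j = (2*k*i + (2*k-j))%N.
Proof. rewrite /yv oddB; have -> : ((2*i).+2 %/ 2 - 1 = i)%N by lia. by []. Qed.
Lemma tmat_odd n k i j : tmat n k (2*i).+1 j = t_odd n k i.+1 j.
Proof. rewrite /tmat oddA; have -> : ((2*i).+2 %/ 2 = i.+1)%N by lia. by []. Qed.
Lemma tmat_even n k i j : tmat n k (2*i).+2 j = t_even n k i.+1 j.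
Proof. rewrite /tmat oddB; have -> : ((2*i).+2 %/ 2 = i.+1)%N by lia. by []. Qed.

Section S.
Variables (n k m : nat).
Hypothesis hk : (0 < k)%N.
Hypothesis hn : n.+1 = (m * (2*k))%N.

Lemma tmatE r j : (1 <= r <= 2* m)%N -> (1 <= j <= k)%N ->
  (yv k r j <= n)%N /\ tmat n k r j = (n - yv k r j)%N%:Z.
Proof.
move=> /andP[r1 r2] /andP[j1 j2].
have [i [e|e]] := rcase _ r1; subst r.
- rewrite yv_odd tmat_odd /t_odd.
  have him : (i < m)%N by lia.
  have hb : (2*k*i + (j-1) <= n)%N.
    have : (k * i.+1 <= k * m)%N by rewrite leq_mul2l; apply/orP; right.
    lia.
  split=> //. have -> : (i.+1 - 1 = i)%N by lia. lia.
- rewrite yv_even tmat_even /t_even.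
  have him : (i < m)%N by lia.
  have hb : (2*k*i + (2*k-j) <= n)%N.
    have : (k * i.+1 <= k * m)%N by rewrite leq_mul2l; apply/orP; right.
    lia.
  split=> //. lia.
Qed.

Lemma dec_yv r j : (1 <= r)%N -> (1 <= j <= k)%N -> dec k (yv k r j) = j /\ rdec k (yv k r j) = r.
Proof.
move=> r1 /andP[j1 j2].
have k2 : (0 < 2*k)%N by lia.
have [i [e|e]] := rcase _ r1; subst r.
- rewrite yv_odd /dec /rdec.
  have -> : (2*k*i + (j-1) = i * (2*k) + (j-1))%N by lia.
  rewrite modnMDl divnMDl // modn_small ?divn_small; try lia.
  have -> : (j - 1 < k)%N by lia.
  split; lia.
- rewrite yv_even /dec /rdec.
  have -> : (2*k*i + (2*k-j) = i * (2*k) + (2*k-j))%N by lia.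
  rewrite modnMDl divnMDl // modn_small ?divn_small; try lia.
  have -> : (2*k - j < k)%N = false by lia.
  split; lia.
Qed.

Lemma yv_dec y : (y <= n)%N ->
  [/\ (1 <= rdec k y <= 2 * m)%N, (1 <= dec k y <= k)%N & yv k (rdec k y) (dec k y) = y].
Proof.
move=> hy.
have k2 : (0 < 2*k)%N by lia.
have e := divn_eq y (2*k).
have hs := ltn_pmod y k2.
set q := (y %/ (2*k))%N in e *; set s := (y %% (2*k))%N in e hs *.
have hq : (q < m)%N.
  rewrite -(ltn_pmul2r k2); lia.
rewrite /rdec /dec -/q -/s.
case: ifP => hsk.
- rewrite yv_odd; split; lia.
- rewrite yv_even; split; lia.
Qed.

Lemma memT x j : x \in Tcol n k j <-> exists2 r, (1 <= r <= 2 * m)%N & x = tmat n k r j.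
Proof.
rewrite /Tcol; have -> : (n.+1 %/ k = 2 * m)%N by rewrite hn mulnA mulnK // mulnC.
split.
- move=> /imfsetP[r /= hr ->]; exists r => //.
  move: hr; rewrite mem_iota; lia.
- move=> [r hr ->]; apply/imfsetP; exists r => //=.
  rewrite mem_iota; lia.
Qed.

Lemma colj x j1 j2 : (1 <= j1 <= k)%N -> (1 <= j2 <= k)%N ->
  x \in Tcol n k j1 -> x \in Tcol n k j2 -> j1 = j2.
Proof.
move=> hj1 hj2 /memT[r1 hr1 ->] /memT[r2 hr2].
have [b1 ->] := tmatE _ _ hr1 hj1; have [b2 ->] := tmatE _ _ hr2 hj2.
move=> e.
have e' : yv k r1 j1 = yv k r2 j2 by lia.
have [d1 _] := @dec_yv r1 _ (andP hr1).1 hj1.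
have [d2 _] := @dec_yv r2 _ (andP hr2).1 hj2.
by rewrite -d1 -d2 e'.
Qed.

Lemma injr j r1 r2 : (1 <= j <= k)%N -> (1 <= r1 <= 2 * m)%N -> (1 <= r2 <= 2 * m)%N ->
  tmat n k r1 j = tmat n k r2 j -> r1 = r2.
Proof.
move=> hj hr1 hr2.
have [b1 ->] := tmatE _ _ hr1 hj; have [b2 ->] := tmatE _ _ hr2 hj.
move=> e.
have e' : yv k r1 j = yv k r2 j by lia.
have [_ d1] := @dec_yv r1 _ (andP hr1).1 hj.
have [_ d2] := @dec_yv r2 _ (andP hr2).1 hj.
by rewrite -d1 -d2 e'.
Qed.
End S.
Arguments colj {n k m} hk hn {x j1 j2}.
Arguments memT {n k m} hk hn {x j}.
Arguments tmatE {n k m} hk hn {r j}.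
Arguments yv_dec {n k m} hk hn {y}.
Arguments injr {n k m} hk hn {j r1 r2}.

Lemma sumcol n k j m' : \sum_(r <- iota 1 (2* m')) tmat n k r j =
   (m'*(2*n+2*k+1))%N%:Z - (2*k* m'*(m'+1))%N%:Z.
Proof.
elim: m' => [|m' IH]; first by rewrite big_nil mul0n muln0.
have -> : (2* m'.+1 = 2* m' + 2)%N by lia.
have -> : iota 1 (2 * m' + 2) = iota 1 (2 * m') ++ [:: (2 * m').+1; (2 * m').+2] by rewrite iotaD add1n.
rewrite big_cat /= !big_cons big_nil IH tmat_odd tmat_even /t_odd /t_even.
lia.
Qed.

Theorem mainTheorem3 (n k : nat) :
  (3 <= n)%N -> odd n -> (0 < k)%N -> (2 * k %| n.+1)%N ->
  let t : int := ((n * n.+1) %/ (2 * k))%N%:Z in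
  [/\ (forall j1 j2 : nat, (1 <= j1 <= k)%N -> (1 <= j2 <= k)%N -> j1 != j2 ->
         (Tcol n k j1 `&` Tcol n k j2)%fset = fset0),
      (forall x : int,
         (exists2 j : nat, (1 <= j <= k)%N & x \in Tcol n k j) <->
         (0 <= x <= n%:Z))
    , (forall j : nat, (1 <= j <= k)%N -> \sum_(x <- Tcol n k j) x = t)
    & (* in particular: the T_j \ {0} partition {1,...,n}, each with sum t *)
      [/\ (forall j1 j2 : nat, (1 <= j1 <= k)%N -> (1 <= j2 <= k)%N -> j1 != j2 ->
             ((Tcol n k j1 `\ 0) `&` (Tcol n k j2 `\ 0))%fset = fset0),
          (forall x : int,
             (exists2 j : nat, (1 <= j <= k)%N & x \in (Tcol n k j `\ 0)%fset) <->
             (1 <= x <= n%:Z))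
        & (forall j : nat, (1 <= j <= k)%N -> \sum_(x <- (Tcol n k j `\ 0)%fset) x = t)]].
Proof.
move=> h3 hodd hk hdiv t.
case/dvdnP: hdiv => m hn.
have ht : t = (n * m)%N%:Z.
  by rewrite /t hn mulnA mulnK // muln_gt0 hk.
have disj j1 j2 : (1 <= j1 <= k)%N -> (1 <= j2 <= k)%N -> j1 != j2 ->
         (Tcol n k j1 `&` Tcol n k j2)%fset = fset0.
  move=> hj1 hj2 hne; apply/fsetP => x; rewrite !inE.
  apply/negP => /andP[x1 x2]; move/eqP: hne; apply.
  exact: (colj hk hn hj1 hj2 x1 x2).
have memb x : (exists2 j : nat, (1 <= j <= k)%N & x \in Tcol n k j) <-> (0 <= x <= n%:Z).
  split.
  - move=> [j hj /(memT hk hn)[r hr ->]].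
    have [b ->] := tmatE hk hn hr hj. lia.
  - move=> hx.
    have [a ea] : exists a : nat, x = a%:Z by exists `|x|%N; lia.
    subst x.
    have [h1 h2 h3'] := yv_dec hk hn (leq_subr a n).
    exists (dec k (n - a)) => //.
    apply/(memT hk hn); exists (rdec k (n - a)) => //.
    have [b ->] := tmatE hk hn h1 h2. rewrite h3'. lia.
have sumT j : (1 <= j <= k)%N -> \sum_(x <- Tcol n k j) x = t.
  move=> hj.
  rewrite (perm_big (map (fun r => tmat n k r j) (iota 1 (2* m)))) /=.
  - rewrite big_map sumcol ht.
    have := congr1 (muln m) hn. lia.
  - apply: uniq_perm; first exact: fset_uniq.
    + rewrite map_inj_in_uniq ?iota_uniq //.
      move=> r1 r2; rewrite !mem_iota => hr1 hr2; apply: (injr hk hn hj); lia.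
    + move=> x; apply/idP/idP.
      * move=> /(memT hk hn)[r hr ->]; apply/mapP; exists r => //; rewrite mem_iota; lia.
      * move=> /mapP[r]; rewrite mem_iota => hr ->; apply/(memT hk hn); exists r => //; lia.
split => //; split.
- move=> j1 j2 hj1 hj2 hne; apply/fsetP => x; rewrite !inE.
  apply/negP => /andP[/andP[_ x1] /andP[_ x2]]; move/eqP: hne; apply.
  exact: (colj hk hn hj1 hj2 x1 x2).
- move=> x; split.
  + move=> [j hj]; rewrite !inE => /andP[x0 xT].
    have : (0 <= x <= n%:Z) by apply/memb; exists j.
    move: x0; lia.
  + move=> hx. have [j hj xT] : exists2 j : nat, (1 <= j <= k)%N & x \in Tcol n k j.
      apply/memb; lia.
    exists j => //; rewrite !inE xT andbT; lia.
- move=> j hj; rewrite -(sumT j hj).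
  case: (boolP (0 \in Tcol n k j)) => h0.
  + by rewrite [in RHS](big_fsetD1 0 h0) /= add0r.
  + suff -> : (Tcol n k j `\ 0)%fset = Tcol n k j by [].
    apply/fsetP => x; rewrite !inE.
    by case: eqP => // ->; rewrite (negbTE h0).
Qed.
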